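(* Every first countable topological space which is statistically compact is sequentially compact.
   Context: For $A\subseteq\mathbb{N}$ let $d_n(A)=|A\cap\{1,\dots,n\}|/n$, $\overline{d}(A)=\limsup_n d_n(A)$, $\underline{d}(A)=\liminf_n d_n(A)$, and $d(A)$ their common value when equal. A sequence in $X$ is a map from an infinite subset $M\subseteq\mathbb{N}$ into $X$, written $(x_n)_{n\in M}$; a subsequence is $(x_n)_{n\in N}$ with $N\subseteq M$ infinite. It is nonthin if $\overline{d}(M)>0$. A nonthin sequence $(x_n)_{n\in M}$ is statistically convergent to $a\in X$ if for every open $U\ni a$, $d(\{n\in M:x_n\notin U\})=0$. A topological space $X$ is statistically compact if every nonthin sequence in $X$ has a nonthin subsequence that is statistically convergent to some point of $X$. *)

(* Defs.v *)
From HB Require Import structures.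
From mathcomp Require Import all_boot all_order all_algebra.
From mathcomp Require Import all_classical all_reals all_analysis.
From mathcomp Require Import Rstruct Rstruct_topology.
Set Implicit Arguments. Unset Strict Implicit. Unset Printing Implicit Defensive.
Import Order.TTheory GRing.Theory Num.Theory.
Local Open Scope classical_set_scope.
Local Open Scope ring_scope.

(* The natural numbers are {1,2,...}; subsets of nat are only inspected on i >= 1. *)

Definition dens_n (A : set nat) (n : nat) : Rdefinitions.R :=
  (\sum_(1 <= i < n.+1) ((i \in A) : nat))%N%:R / n%:R.

Definition upper_density (A : set nat) : \bar Rdefinitions.R :=
  limn_esup (fun n => (dens_n A n)%:E).
Definition lower_density (A : set nat) : \bar Rdefinitions.R :=
  limn_einf (fun n => (dens_n A n)%:E).

Definition has_density (A : set nat) (a : Rdefinitions.R) : Prop :=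
  upper_density A = a%:E /\ lower_density A = a%:E.

(* A sequence (x_n)_{n in M} is given by its (infinite) index set M and a map x
   (values of x outside M are irrelevant). It is nonthin iff upper density of M > 0
   (which forces M to be infinite). *)
Definition nonthin (M : set nat) : Prop := (0 < upper_density M)%E.

Definition stat_converges {X : topologicalType} (M : set nat) (x : nat -> X) (a : X) : Prop :=
  nonthin M /\
  forall U : set X, open U -> U a -> has_density [set n | M n /\ ~ U (x n)] 0.

Definition statistically_compact (X : topologicalType) : Prop :=
  forall (M : set nat) (x : nat -> X), infinite_set M -> nonthin M ->
    exists (N : set nat) (a : X),
      [/\ N `<=` M, infinite_set N, nonthin N & stat_converges N x a].

Definition first_countable (X : topologicalType) : Prop :=
  forall x : X, exists B : set (set X),
    [/\ countable B, (forall U, B U -> open U /\ U x) &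
        (forall V, nbhs x V -> exists2 U, B U & U `<=` V)].

Definition sequentially_compact (X : topologicalType) : Prop :=
  forall x : nat -> X, exists (phi : nat -> nat) (a : X),
    {homo phi : m n / (m < n)%N} /\ (x \o phi) @ \oo --> a.

(* Main.v *)
Require Import Defs.
From mathcomp Require Import all_boot all_order all_algebra.
From mathcomp Require Import all_classical all_reals all_analysis.
From mathcomp Require Import zify.
From mathcomp Require Import Rstruct Rstruct_topology.
Import Order.TTheory GRing.Theory Num.Theory.
Local Open Scope classical_set_scope.
Local Open Scope ring_scope.

Lemma cnt_le (N T : set nat) m n :
  (forall i, (m < i)%N -> N i -> T i) ->
  (\sum_(1 <= i < n.+1) ((i \in N) : nat) <= \sum_(1 <= i < n.+1) ((i \in T) : nat) + m)%N.
Proof.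
move=> H; elim: n => [|n IH]; first by rewrite !big_geq.
rewrite (big_nat_recr n.+1 1 (fun i => ((i \in N) : nat))) // (big_nat_recr n.+1 1 (fun i => ((i \in T) : nat))) //=.
case: (leqP n.+1 m) => hn.
  have : (\sum_(1 <= i < n.+1) ((i \in N) : nat) <= n)%N.
    apply: leq_trans (_ : \sum_(1 <= i < n.+1) 1 <= _)%N.
      by apply: leq_sum => i _; case: (i \in N).
    by rewrite sum_nat_const_nat muln1 subn1.
  case: (n.+1 \in N); case: (n.+1 \in T) => /= h; rewrite ?addn0 ?addn1; lia.
case hN: (n.+1 \in N) => /=; last by lia.
have -> : n.+1 \in T by apply/mem_set/H => //; exact/set_mem.
rewrite /=; lia.
Qed.

Lemma dens_ge0 A n : 0 <= dens_n A n.
Proof. by rewrite /dens_n divr_ge0. Qed.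

Lemma key (N T : set nat) m : nonthin N -> has_density T 0 ->
  (forall i, (m < i)%N -> N i -> T i) -> False.
Proof.
move=> hN [hT _] H.
have cT : (fun n => (dens_n T n)%:E) @ \oo --> 0%E.
  apply: limn_esup_le_cvg; first by rewrite -/(upper_density T) hT.
  by move=> n; rewrite lee_fin dens_ge0.
have cm : (fun n => (m%:R / n%:R : Rdefinitions.R)) @ \oo --> (0 : Rdefinitions.R).
  have h : (fun n => (m%:R : Rdefinitions.R) * harmonic n) @ \oo --> (0 : Rdefinitions.R).
    by have := cvgM (cvg_cst (m%:R : Rdefinitions.R)) (@cvg_harmonic Rdefinitions.R); rewrite mulr0; apply.
  rewrite -cvg_shiftS; exact: h.
have cmE : (fun n => (m%:R / n%:R : Rdefinitions.R)%:E) @ \oo --> 0%E.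
  by apply: cvg_EFin; [exact: nearW | exact: cm].
have cN : (fun n => (dens_n N n)%:E) @ \oo --> 0%E.
  apply: (@squeeze_cvge _ _ _ _ (cst 0%E) _ (fun n => (dens_n T n)%:E + (m%:R / n%:R)%:E)%E).
  - apply: nearW => n; rewrite lee_fin dens_ge0 /= -EFinD lee_fin.
    rewrite /dens_n -mulrDl ler_wpM2r // -natrD ler_nat.
    exact: cnt_le.
  - exact: cvg_cst.
  - rewrite -[0%E]adde0; apply: cvgeD => //.
have := (cvg_limn_einf_sup cN).2.
rewrite /nonthin /upper_density in hN.
by move=> e; rewrite e ltxx in hN.
Qed.

Lemma nonthinT : nonthin setT.
Proof.
have h : (fun n => (dens_n setT n)%:E) @ \oo --> 1%E.
  have e : {near \oo, cst 1%E =1 (fun n => (dens_n setT n)%:E)}.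
    near=> n; rewrite /dens_n /=.
    have -> : (\sum_(1 <= i < n.+1) ((i \in [set: nat]) : nat) = n)%N.
      under eq_bigr do rewrite in_setT.
      by rewrite sum_nat_const_nat muln1 subn1.
    rewrite divff //= ?pnatr_eq0 -lt0n; near: n; exists 1%N => //.
  exact: (cvg_trans (near_eq_cvg e) (cvg_cst _)).
rewrite /nonthin /upper_density (cvg_limn_einf_sup h).2 //.
Unshelve. all: by end_near. Qed.

Theorem mainTheorem6 (X : topologicalType) :
  first_countable X -> statistically_compact X -> sequentially_compact X.
Proof.
move=> fc sc x.
have [N [a [_ infN ntN [_ hconv]]]] := sc setT x infinite_nat nonthinT.
have [B [cB hBo hBn]] := fc a.
have [f finj] := countable_injP _ cB.
pose W k := [set y | forall U, B U -> (f U < k)%N -> U y].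
have Wmono k n : (k <= n)%N -> W n `<=` W k.
  by move=> kn y Wy U BU fU; apply: Wy => //; exact: leq_trans fU kn.
have Wn k : nbhs a (W k).
  elim: k => [|k IH].
    by apply: filterS filterT => y _ U _; rewrite ltn0.
  case: (pselect (exists U, B U /\ f U = k)) => [[U0 [BU0 fU0]]|nU].
    have U0n : nbhs a U0 by apply: open_nbhs_nbhs; split; apply hBo.
    apply: filterS (filterI IH U0n) => y [Wy U0y] U BU.
    rewrite ltnS leq_eqVlt => /orP [/eqP e | lt]; last exact: Wy.
    have -> : U = U0 by apply: finj; [exact: mem_set | exact: mem_set | rewrite e fU0].
    exact: U0y.
  apply: filterS IH => y Wy U BU.
  rewrite ltnS leq_eqVlt => /orP [/eqP e | lt]; last exact: Wy.
  by exfalso; apply: nU; exists U.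
have Wsmall V : nbhs a V -> exists k, W k `<=` V.
  move=> /hBn [U BU UV]; exists (f U).+1 => y Wy.
  by apply: UV; apply: Wy.
have inf k m : exists n, (m < n)%N /\ W k (x n).
  apply: contrapT => hne.
  move: (Wn k); rewrite nbhsE; move=> [Ob [oO Oa] OW].
  apply: (@key N [set n | N n /\ ~ Ob (x n)] m ntN (hconv Ob oO Oa)).
  move=> i mi Ni; split => // Oxi; apply: hne; exists i; split => //.
  exact: OW.
have g k m : {n | (m < n)%N /\ W k (x n)} := cid (inf k m).
pose phi := fix phi k := match k with 0 => proj1_sig (g 0%N 0%N)
   | k'.+1 => proj1_sig (g k'.+1 (phi k')) end.
have phiS k : (phi k < phi k.+1)%N by exact: (proj2_sig (g k.+1 (phi k))).1.
have phiW k : W k (x (phi k)).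
  by case: k => [|k]; [exact: (proj2_sig (g 0%N 0%N)).2 | exact: (proj2_sig (g k.+1 (phi k))).2].
exists phi, a; split.
  exact: (homo_ltn ltn_trans phiS).
move=> V /Wsmall [k hk].
exists k => // n /= kn; apply: hk; apply: (Wmono k n) => //.
Qed.
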